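(* Let $n\ge2$, let $\alpha=(\alpha_1,\dots,\alpha_n)^T\in\mathbb{R}^n$ with $\alpha_1>\alpha_2>\cdots>\alpha_n$, and let $A=(a_{ij})$ be a real $n\times n$ matrix such that $AP\alpha\sim A\alpha$ for every $P\in\mathbf{P}_n$. Then all column sums of $A$ are equal: $\sum_{l=1}^n a_{ls}=\sum_{l=1}^n a_{lt}$ for all $1\le s,t\le n$.
   Context: For $x,y\in\mathbb{R}^n$, $x\prec y$ means $x=Dy$ for some $n\times n$ doubly stochastic matrix $D$; $x\sim y$ means $x\prec y$ and $y\prec x$. $\mathbf{P}_n$ is the set of $n\times n$ permutation matrices. *)

(* Defs.v *)
From HB Require Import structures.
From mathcomp Require Import all_boot all_order all_algebra all_fingroup.
Set Implicit Arguments. Unset Strict Implicit. Unset Printing Implicit Defensive.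
Import Order.TTheory GRing.Theory Num.Theory.
Local Open Scope ring_scope.

Definition doubly_stochastic (R : realFieldType) (n : nat) (D : 'M[R]_n) : Prop :=
  (forall i j, 0 <= D i j) /\
  (forall i, \sum_(j < n) D i j = 1) /\
  (forall j, \sum_(i < n) D i j = 1).

Definition majorized (R : realFieldType) (n : nat) (x y : 'cV[R]_n) : Prop :=
  exists D : 'M[R]_n, doubly_stochastic D /\ x = D *m y.

Definition maj_equiv (R : realFieldType) (n : nat) (x y : 'cV[R]_n) : Prop :=
  majorized x y /\ majorized y x.

(* Main.v *)
Require Import Defs.
From HB Require Import structures.
From mathcomp Require Import all_boot all_order all_algebra all_fingroup.
From mathcomp Require Import ring.
Import Order.TTheory GRing.Theory Num.Theory.
Local Open Scope ring_scope.

Lemma maj_sum (R : realFieldType) (n : nat) (x y : 'cV[R]_n) :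
  majorized x y -> \sum_i x i 0 = \sum_i y i 0.
Proof.
move=> [D [[_ [_ Hc]] ->]].
under eq_bigr do rewrite mxE.
rewrite exchange_big /=; apply: eq_bigr => j _.
by rewrite -mulr_suml Hc mul1r.
Qed.

Lemma sumAv (R : realFieldType) (n : nat) (A : 'M[R]_n) (v : 'cV[R]_n) :
  \sum_i (A *m v) i 0 = \sum_j (\sum_l A l j) * v j 0.
Proof.
under eq_bigr do rewrite mxE.
by rewrite exchange_big /=; apply: eq_bigr => j _; rewrite mulr_suml.
Qed.

Theorem mainTheorem4 (R : realFieldType) (n : nat) (Hn : (2 <= n)%N)
  (alpha : 'cV[R]_n)
  (Hdec : forall i j : 'I_n, (i < j)%N -> alpha j 0 < alpha i 0)
  (A : 'M[R]_n)
  (HA : forall s : 'S_n, maj_equiv (A *m (perm_mx s *m alpha)) (A *m alpha)) :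
  forall s t : 'I_n, \sum_(l < n) A l s = \sum_(l < n) A l t.
Proof.
move=> s t.
have [->|st] := eqVneq s t; first by [].
have Hne : alpha s 0 != alpha t 0.
  have [lt|gt|eq] := ltngtP s t.
  - by rewrite gt_eqF // Hdec.
  - by rewrite lt_eqF // Hdec.
  - by exfalso; move/eqP: st; apply; apply: val_inj.
have := @maj_sum _ _ _ _ (proj1 (HA (tperm s t))).
rewrite !sumAv => /eqP; rewrite -subr_eq0 -sumrB; move=> /eqP H.
rewrite (bigD1 s) // in H.
rewrite (bigD1 t (P := fun j => j != s)) //= in H.
rewrite [X in _ + (_ + X)]big1 in H; last first.
  move=> j /andP [js jt].
  by rewrite -row_permE mxE tpermD 1?eq_sym // subrr.
rewrite -!row_permE !mxE tpermL tpermR addr0 in H.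
apply/eqP; rewrite -subr_eq0.
have : (\sum_(l < n) A l s - \sum_(l < n) A l t) * (alpha t 0 - alpha s 0) == 0.
  by apply/eqP; rewrite -[RHS]H; ring.
rewrite mulf_eq0 !subr_eq0 => /orP [] // /eqP E.
by rewrite E eqxx in Hne.
by rewrite eq_sym.
Qed.
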